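(* Let $n,p$ be positive integers with $D=n-p\ge1$, let $g:\{0,1\}^p\to\{0,1\}$ be a Boolean function whose algebraic normal form contains only non-linear terms, and define $f:\{0,1\}^n\to\{0,1\}^D$ by $f(\mathbf{x})=\mathbf{y}$ with $y_i=x_i+g(x_{i+1},\dots,x_{i+p})$ for $1\le i\le D$. If $\mathbf{x}$ is uniformly distributed on $\{0,1\}^n$, then $f(\mathbf{x})$ is uniformly distributed on $\{0,1\}^D$.
   Context: $+$ denotes addition over $GF(2)$ (XOR). ''Only non-linear terms'' means every monomial of the algebraic normal form of $g$ is a product of at least two input variables. *)

(* Defs.v *)
From mathcomp Require Import all_boot all_order all_algebra.
Set Implicit Arguments. Unset Strict Implicit. Unset Printing Implicit Defensive.

(* A Boolean function g : {0,1}^p -> {0,1} (inputs as p-tuples of bools,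
   true = 1, addition over GF(2) = xor = addb) whose algebraic normal form
   contains only non-linear terms: g is the GF(2)-sum of monomials
   prod_{i in S} x_i with coefficients a S, where a S = 0 whenever |S| <= 1
   (no constant term, no degree-1 terms).  Since the ANF is unique, this
   existential form determines the ANF of g. *)
Definition anf_only_nonlinear (p : nat) (g : p.-tuple bool -> bool) : Prop :=
  exists a : {set 'I_p} -> bool,
    (forall S : {set 'I_p}, #|S| <= 1 -> a S = false) /\
    (forall x : p.-tuple bool,
       g x = \big[addb/false]_(S : {set 'I_p}) (a S && [forall i in S, tnth x i])).

(* f : {0,1}^n -> {0,1}^(n-p), y_i = x_i + g(x_{i+1}, ..., x_{i+p}),
   using 0-based indices: for 0 <= i < n - p,
   y_i = x_i xor g(x_{i+1}, ..., x_{i+p}) (the largest index used is n-1). *)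
Definition shift_map (n p : nat) (g : p.-tuple bool -> bool)
    (x : n.-tuple bool) : (n - p).-tuple bool :=
  [tuple addb (nth false x i) (g [tuple nth false x (i + 1 + j) | j < p])
   | i < n - p].

Definition push_uniform_prob (n p : nat) (g : p.-tuple bool -> bool)
    (y : (n - p).-tuple bool) : rat :=
  (#|[set x : n.-tuple bool | shift_map g x == y]|%:R / (2 ^ n)%:R)%R.

(* Main.v *)
Require Import Defs.
From mathcomp Require Import all_boot all_order all_algebra.
From mathcomp Require Import ring zify.

Section Aux.
Variables (n p : nat) (g : p.-tuple bool -> bool).

Definition phi (x : n.-tuple bool) : (n - p).-tuple bool * p.-tuple bool :=
  (shift_map g x, [tuple nth false x (n - p + j) | j < p]).

Lemma phi_inj : p <= n -> injective phi.
Proof.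
move=> pn x x' E; have E1 : shift_map g x = shift_map g x' := congr1 fst E.
have E2 := congr1 snd E; rewrite /phi /= in E2.
have key : forall k i, n - k <= i < n -> nth false x i = nth false x' i.
  elim=> [|k IH] i /andP[Hi1 Hi2].
    by move: Hi1; rewrite subn0 leqNgt Hi2.
  have [Hk|Hk] := boolP (n - k <= i); first by apply: IH; rewrite Hk.
  have ei : i = n - k.+1 by apply/eqP; rewrite eqn_leq Hi1 andbT; lia.
  have [Hp|Hp] := boolP (n - p <= i).
    have Hj : i - (n - p) < p by lia.
    have := congr1 (fun t => tnth t (Ordinal Hj)) E2.
    by rewrite !tnth_mktuple /= subnKC.
  have Hj : i < n - p by lia.
  have := congr1 (fun t => tnth t (Ordinal Hj)) E1.
  rewrite /shift_map !tnth_mktuple /=.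
  have -> : [tuple nth false x (i + 1 + j) | j < p] =
            [tuple nth false x' (i + 1 + j) | j < p].
    apply: eq_mktuple => j; apply: IH.
    have := ltn_ord j; lia.
  by case: (nth false x i); case: (nth false x' i); case: (g _).
apply: val_inj; apply: (@eq_from_nth _ false); first by rewrite !size_tuple.
move=> i; rewrite size_tuple => Hi; apply: (key n); rewrite Hi andbT; lia.
Qed.

End Aux.

Theorem mainTheorem6 (n p : nat) (g : p.-tuple bool -> bool) :
  0 < n -> 0 < p -> 1 <= n - p ->
  anf_only_nonlinear g ->
  forall y : (n - p).-tuple bool,
    push_uniform_prob g y = (1 / (2 ^ (n - p))%:R)%R.
Proof.
move=> n0 p0 np _ y.
have pn : p <= n by lia.
have [psi phiK psiK] : bijective (@phi n p g).
  apply: inj_card_bij; first exact: phi_inj.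
  by rewrite card_prod !card_tuple card_bool -expnD subnK.
have E : [set x : n.-tuple bool | shift_map g x == y] =
         psi @: [set z : (n - p).-tuple bool * p.-tuple bool | z.1 == y].
  apply/setP => x; rewrite inE; apply/idP/imsetP.
    by move=> Hx; exists (phi n p g x); rewrite ?inE ?phiK.
  by case=> z; rewrite inE => /eqP <- ->; rewrite -[in X in X.1](psiK z).
have C : #|[set x : n.-tuple bool | shift_map g x == y]| = 2 ^ p.
  rewrite E card_imset; last exact: can_inj psiK.
  have -> : [set z : (n - p).-tuple bool * p.-tuple bool | z.1 == y] =
            setX [set y] setT.
    by apply/setP => z; rewrite !inE andbT.
  by rewrite cardsX cards1 cardsT card_tuple card_bool mul1n.
rewrite /push_uniform_prob C.
have -> : 2 ^ n = 2 ^ (n - p) * 2 ^ p by rewrite -expnD subnK.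
rewrite GRing.natrM.
have h1 : ((2 ^ p)%:R : rat) != 0%R by rewrite Num.Theory.pnatr_eq0 expn_eq0.
have h2 : ((2 ^ (n - p))%:R : rat) != 0%R by rewrite Num.Theory.pnatr_eq0 expn_eq0.
by field; rewrite h1 h2.
Qed.
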